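(* Let $\mathbb{K}$ be a field and $\alpha\in\mathbb{K}^*$. For $n$ even, $X_n(\alpha)$ is smooth. For $n$ odd and $\alpha\neq(-1)^{(n+1)/2}$, $X_n(\alpha)$ is smooth. For $n$ odd and $\alpha=(-1)^{(n+1)/2}$, $X_n(\alpha)$ has a unique singular point, namely $x_i=x'_i=0$ for odd $i$ and $x_i=x'_i=-(-1)^{(n+i-1)/2}$ for even $i$.
   Context: For $\alpha$ invertible and $n\ge1$, $X_n(\alpha)$ is the affine variety over $\mathbb{K}$ in variables $x_1,\dots,x_n,x'_1,\dots,x'_n$ defined by $x_1x'_1=1+\alpha x_2$, $x_ix'_i=1+x_{i-1}x_{i+1}$ for $2\le i\le n-1$, $x_nx'_n=1+x_{n-1}$ (for $n=1$: $x_1x'_1=1+\alpha$); $X_0(\alpha)$ is a point. *)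

(* Defs.v *)
From HB Require Import structures.
From mathcomp Require Import all_boot all_order all_algebra.
From mathcomp Require Import mpoly.
Set Implicit Arguments. Unset Strict Implicit. Unset Printing Implicit Defensive.
Import Order.TTheory GRing.Theory.
Local Open Scope ring_scope.

(* Variables of X_n(alpha): the polynomial ring K[x_1..x_n, x'_1..x'_n] is
   {mpoly K[n + n]}; the variable x_{k+1} is 'X_(lshift n k) and x'_{k+1} is
   'X_(rshift n k)  (0-based index k < n). *)
Definition xvar (K : nzRingType) (n : nat) (k : nat) : {mpoly K[n + n]} :=
  if @insub nat (fun m => (m < n)%N) 'I_n k is Some j then 'X_(lshift n j) else 0.
Definition xpvar (K : nzRingType) (n : nat) (k : nat) : {mpoly K[n + n]} :=
  if @insub nat (fun m => (m < n)%N) 'I_n k is Some j then 'X_(rshift n j) else 0.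

(* Defining equation number i+1 (0-based i : 'I_n), written as F = 0:
     x_1 x'_1 - 1 - alpha * x_2                 (i = 0, n >= 2)
     x_i x'_i - 1 - x_{i-1} x_{i+1}             (middle)
     x_n x'_n - 1 - x_{n-1}                     (i = n-1, n >= 2)
     x_1 x'_1 - 1 - alpha                       (n = 1)                    *)
Definition Xeq (K : nzRingType) (a : K) (n : nat) (i : 'I_n) : {mpoly K[n + n]} :=
  xvar K n i * xpvar K n i - 1
  - (if (i : nat) == 0%N then a%:MP else xvar K n i.-1)
    * (if i.+1 == n then 1 else xvar K n i.+1).

Definition onX (K L : fieldType) (f : {rmorphism K -> L}) (a : K) (n : nat)
  (v : 'I_(n + n) -> L) : Prop :=
  forall i : 'I_n, (map_mpoly f (Xeq a i)).@[v] = 0.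

Definition jacobianX (K L : fieldType) (f : {rmorphism K -> L}) (a : K) (n : nat)
  (v : 'I_(n + n) -> L) : 'M[L]_(n, n + n) :=
  \matrix_(i < n, j < n + n) (map_mpoly f (mderiv j (Xeq a i))).@[v].

(* Singular point (Jacobian criterion; X_n(alpha) has pure dimension n,
   being cut out by n equations in 2n variables). *)
Definition singularX (K L : fieldType) (f : {rmorphism K -> L}) (a : K) (n : nat)
  (v : 'I_(n + n) -> L) : Prop :=
  onX f a v /\ (\rank (jacobianX f a v) < n)%N.

Definition smoothX (K : fieldType) (a : K) (n : nat) : Prop :=
  forall (L : fieldType) (f : {rmorphism K -> L}) (v : 'I_(n + n) -> L),
    ~ singularX f a v.

(* The candidate singular point: x_i = x'_i = 0 for odd i, and
   x_i = x'_i = -(-1)^((n+i-1)/2) for even i (1-based i = k+1). *)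
Definition singPt (L : nzRingType) (n : nat) (j : 'I_(n + n)) : L :=
  let k : nat := match split j with inl k => k | inr k => k end in
  if odd k then - (-1) ^+ ((n + k)./2) else 0.

(* Main.v *)
Require Import Defs.
From HB Require Import structures.
From mathcomp Require Import all_boot all_order all_algebra.
From mathcomp Require Import mpoly.
From mathcomp Require Import ring zify.
From Stdlib Require Classical_Prop.
Set Implicit Arguments. Unset Strict Implicit. Unset Printing Implicit Defensive.
Import GRing.Theory.
Local Open Scope ring_scope.

Definition xv (L : fieldType) (n : nat) (v : 'I_(n + n) -> L) (k : nat) : L :=
  if @insub nat (fun m => (m < n)%N) 'I_n k is Some j then v (lshift n j) else 0.
Definition xpv (L : fieldType) (n : nat) (v : 'I_(n + n) -> L) (k : nat) : L :=
  if @insub nat (fun m => (m < n)%N) 'I_n k is Some j then v (rshift n j) else 0.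
Definition dxv (L : fieldType) (n : nat) (j : 'I_(n + n)) (k : nat) : L :=
  if @insub nat (fun m => (m < n)%N) 'I_n k is Some k' then ((lshift n k' == j) : nat)%:R else 0.
Definition dxpv (L : fieldType) (n : nat) (j : 'I_(n + n)) (k : nat) : L :=
  if @insub nat (fun m => (m < n)%N) 'I_n k is Some k' then ((rshift n k' == j) : nat)%:R else 0.

Lemma mderiv_X (K : fieldType) (N : nat) (j k : 'I_N) :
  mderiv j ('X_k : {mpoly K[N]}) = ((k == j) : nat)%:R.
Proof.
rewrite mderivX mnm1E; case: eqP => [->|_] /=.
  have -> : (U_(j) - U_(j) = 0)%MM by apply/mnmP => l; rewrite mnmBE subnn mnm0E.
  by rewrite scale1r mpolyX0.
by rewrite scale0r.
Qed.

Lemma eval_xvar (K L : fieldType) (f : {rmorphism K -> L}) n v k :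
  (map_mpoly f (xvar K n k)).@[v] = xv v k.
Proof.
rewrite /xvar /xv; case: insub => [j|] /=.
  by rewrite map_mpolyX mevalXU.
by rewrite raddf0 meval0.
Qed.

Lemma eval_xpvar (K L : fieldType) (f : {rmorphism K -> L}) n v k :
  (map_mpoly f (xpvar K n k)).@[v] = xpv v k.
Proof.
rewrite /xpvar /xpv; case: insub => [j|] /=.
  by rewrite map_mpolyX mevalXU.
by rewrite raddf0 meval0.
Qed.

Lemma eval_nat (K L : fieldType) (f : {rmorphism K -> L}) N (v : 'I_N -> L) (b : nat) :
  (map_mpoly f (b%:R : {mpoly K[N]})).@[v] = b%:R.
Proof. by rewrite rmorph_nat -mpolyC_nat mevalC. Qed.

Lemma eval_dxvar (K L : fieldType) (f : {rmorphism K -> L}) n v j k :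
  (map_mpoly f (mderiv j (xvar K n k))).@[v] = dxv L j k.
Proof.
rewrite /xvar /dxv; case: insub => [i|] /=.
  by rewrite mderiv_X eval_nat.
by rewrite mderiv0 raddf0 meval0.
Qed.

Lemma eval_dxpvar (K L : fieldType) (f : {rmorphism K -> L}) n v j k :
  (map_mpoly f (mderiv j (xpvar K n k))).@[v] = dxpv L j k.
Proof.
rewrite /xpvar /dxpv; case: insub => [i|] /=.
  by rewrite mderiv_X eval_nat.
by rewrite mderiv0 raddf0 meval0.
Qed.

Definition Pv (L : fieldType) (a : L) n (v : 'I_(n + n) -> L) (k : nat) : L :=
  if k == 0%N then a else xv v k.-1.
Definition Qv (L : fieldType) n (v : 'I_(n + n) -> L) (k : nat) : L :=
  if k.+1 == n then 1 else xv v k.+1.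

Lemma eval_Xeq (K L : fieldType) (f : {rmorphism K -> L}) (a : K) n v (i : 'I_n) :
  (map_mpoly f (Xeq a i)).@[v] = xv v i * xpv v i - 1 - Pv (f a) v i * Qv v i.
Proof.
rewrite /Xeq /Pv /Qv !rmorphB !rmorphM rmorph1 /=.
rewrite eval_xvar eval_xpvar meval1.
congr (_ - _ * _).
  by case: ifP => _; rewrite ?map_mpolyC ?mevalC ?eval_xvar.
by case: ifP => _; rewrite ?rmorph1 ?meval1 ?eval_xvar.
Qed.

Lemma eval_dXeq (K L : fieldType) (f : {rmorphism K -> L}) (a : K) n v (i : 'I_n) j :
  (map_mpoly f (mderiv j (Xeq a i))).@[v] =
  dxv L j i * xpv v i + xv v i * dxpv L j i
  - ((if (i : nat) == 0%N then 0 else dxv L j i.-1) * Qv v i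
     + Pv (f a) v i * (if i.+1 == n then 0 else dxv L j i.+1)).
Proof.
rewrite /Xeq /Pv /Qv !mderivB !mderivM.
have -> : mderiv j (1 : {mpoly K[n+n]}) = 0 by rewrite -mpolyC1 mderivC.
rewrite subr0 !rmorphB !rmorphD !rmorphM /=.
rewrite eval_xvar eval_xpvar eval_dxvar eval_dxpvar.
have d1 : mderiv j (1 : {mpoly K[n+n]}) = 0 by rewrite -mpolyC1 mderivC.
congr (_ - (_ + _)).
- congr (_ * _).
  + by case: ifP => _; rewrite ?mderivC ?raddf0 ?meval0 ?eval_dxvar.
  + by case: ifP => _; rewrite ?rmorph1 ?meval1 ?eval_xvar.
- congr (_ * _).
  + by case: ifP => _; rewrite ?map_mpolyC ?mevalC ?eval_xvar.
  + by case: ifP => _; rewrite ?d1 ?raddf0 ?meval0 ?eval_dxvar.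
Qed.
Definition cn (L : fieldType) n (c : 'rV[L]_n) (k : nat) : L :=
  if @insub nat (fun m => (m < n)%N) 'I_n k is Some i then c 0 i else 0.

Lemma cn_ord (L : fieldType) n (c : 'rV[L]_n) (i : 'I_n) : cn c i = c 0 i.
Proof. by rewrite /cn valK. Qed.

Lemma cn_out (L : fieldType) n (c : 'rV[L]_n) (k : nat) : (n <= k)%N -> cn c k = 0.
Proof. by move=> h; rewrite /cn insubN // -leqNgt. Qed.

Lemma dxv_l (L : fieldType) n (k : 'I_n) (m : nat) :
  dxv L (lshift n k) m = ((m == k) : nat)%:R.
Proof.
rewrite /dxv; case: insubP => [m' _ <-|hm] /=.
  by rewrite -val_eqE.
by case: eqP hm => // ->; rewrite ltn_ord.
Qed.

Lemma dxv_r (L : fieldType) n (k : 'I_n) (m : nat) : dxv L (rshift n k) m = 0.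
Proof.
rewrite /dxv; case: insubP => [m' _ _|hm] //=.
by rewrite -val_eqE /= ltn_eqF // (leq_trans (ltn_ord m') (leq_addr k n)).
Qed.

Lemma dxpv_l (L : fieldType) n (k : 'I_n) (m : nat) : dxpv L (lshift n k) m = 0.
Proof.
rewrite /dxpv; case: insubP => [m' _ _|hm] //=.
by rewrite -val_eqE /= gtn_eqF // (leq_trans (ltn_ord k) (leq_addr m' n)).
Qed.

Lemma dxpv_r (L : fieldType) n (k : 'I_n) (m : nat) :
  dxpv L (rshift n k) m = ((m == k) : nat)%:R.
Proof.
rewrite /dxpv; case: insubP => [m' _ <-|hm] /=.
  by rewrite -val_eqE /= eqn_add2l.
by case: eqP hm => // ->; rewrite ltn_ord.
Qed.

Lemma sum_ind (L : fieldType) n (G : nat -> L) (m : nat) :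
  \sum_(i < n) (((i : nat) == m) : nat)%:R * G i = if (m < n)%N then G m else 0.
Proof.
elim: n => [|n IH]; first by rewrite big_ord0.
rewrite big_ord_recr /= IH.
case: (ltngtP m n) => [h|h|->]; rewrite ?eqxx ?mul1r ?add0r.
- by rewrite mul0r addr0 ltnS (ltnW h).
- by rewrite mul0r ltnS leqNgt h.
- by rewrite ltnSn.
Qed.

Lemma sum_ind_cn (L : fieldType) n (c : 'rV[L]_n) (H : nat -> L) (m : nat) :
  \sum_(i < n) (((i : nat) == m) : nat)%:R * (cn c i * H i) = cn c m * H m.
Proof.
rewrite (@sum_ind L n (fun i => cn c i * H i) m); case: ltnP => // h.
by rewrite cn_out // mul0r.
Qed.

Lemma col_r (K L : fieldType) (f : {rmorphism K -> L}) (a : K) n v (c : 'rV[L]_n) (k : 'I_n) :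
  (c *m jacobianX f a v) 0 (rshift n k) = cn c k * xv v k.
Proof.
rewrite !mxE -sum_ind_cn; apply: eq_bigr => i _.
rewrite mxE eval_dXeq dxv_r dxpv_r cn_ord.
have -> : (if (i : nat) == 0%N then 0 else dxv L (rshift n k) i.-1) = 0 :> L.
  by case: ifP; rewrite ?dxv_r.
have -> : (if i.+1 == n then 0 else dxv L (rshift n k) i.+1) = 0 :> L.
  by case: ifP; rewrite ?dxv_r.
by rewrite !mul0r !mulr0 add0r addr0 subr0 mulrA mulrC.
Qed.

Lemma col_l (K L : fieldType) (f : {rmorphism K -> L}) (a : K) n v (c : 'rV[L]_n) (k : 'I_n) :
  (c *m jacobianX f a v) 0 (lshift n k) =
  cn c k * xpv v k - cn c k.+1 * Qv v k.+1
  - (if (k : nat) is k'.+1 then cn c k' * Pv (f a) v k' else 0).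
Proof.
rewrite !mxE.
have -> : \sum_j c 0 j * jacobianX f a v j (lshift n k) =
  \sum_(i < n) ((((i : nat) == k) : nat)%:R * (cn c i * xpv v i)
     - (((i : nat) == k.+1) : nat)%:R * (cn c i * Qv v i)
     - (if (k : nat) is k'.+1 then (((i : nat) == k') : nat)%:R * (cn c i * Pv (f a) v i) else 0)).
  apply: eq_bigr => i _; rewrite mxE eval_dXeq !dxv_l dxpv_l cn_ord mulr0 addr0.
  have -> : (if (i : nat) == 0%N then 0 else (((i.-1 == k) : nat)%:R : L))
      = (((i : nat) == k.+1) : nat)%:R.
    by case: i => [[|i] hi] //=.
  have -> : (if i.+1 == n then 0 else (((i.+1 == k) : nat)%:R : L))
      = (if (k : nat) is k'.+1 then (((i : nat) == k') : nat)%:R else 0).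
    case: k => [[|k] hk] /=; first by case: ifP.
    rewrite eqSS; case: ifP => // /eqP hn; case: eqP => // hik.
    by move: hk; rewrite -hn hik ltnn.
  rewrite mulrBr mulrDr opprD addrA; congr (_ - _ - _); first by rewrite mulrCA.
    by rewrite mulrCA.
  case: (k : nat) => [|k']; first by rewrite !mulr0.
  by ring.
rewrite !sumrB !sum_ind_cn; congr (_ - _ - _).
case: (k : nat) => [|k']; first by rewrite big1.
by rewrite sum_ind_cn.
Qed.
Definition PP (L : fieldType) (a : L) (x : nat -> L) (k : nat) : L :=
  if k == 0%N then a else x k.-1.
Definition QQ (L : fieldType) (n : nat) (x : nat -> L) (k : nat) : L :=
  if k.+1 == n then 1 else x k.+1.
Definition sg (L : fieldType) (n k : nat) : L :=
  if odd k then - (-1) ^+ ((n + k)./2) else 0.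

Lemma sgsq (L : fieldType) (m : nat) : (-1) ^+ m * (-1) ^+ m = 1 :> L.
Proof. by rewrite -exprD addnn -mul2n exprM expr2 mulN1r opprK expr1n. Qed.

Lemma half_oo (p q : nat) : (p.*2.+1 + q.*2.+1)./2 = (p + q).+1.
Proof. by rewrite addSn addnS -doubleD -doubleS doubleK. Qed.

Lemma sg_odd (L : fieldType) (p q : nat) : sg L p.*2.+1 q.*2.+1 = (-1) ^+ (p + q).
Proof.
by rewrite /sg half_oo oddS odd_double /= exprS mulN1r opprK.
Qed.

Lemma sg_even (L : fieldType) (n q : nat) : sg L n q.*2 = 0.
Proof. by rewrite /sg odd_double. Qed.

Lemma forward (L : fieldType) (a : L) (n : nat) (x y c : nat -> L) :
  (forall k, (k < n)%N -> x k * y k - 1 - PP a x k * QQ n x k = 0) ->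
  (forall k, (n <= k)%N -> c k = 0) ->
  (forall k, (k < n)%N -> c k * x k = 0) ->
  (forall k, (k < n)%N -> c k * y k - c k.+1 * QQ n x k.+1
       - (if k is k'.+1 then c k' * PP a x k' else 0) = 0) ->
  (exists k, c k != 0) ->
  odd n /\ a = (-1) ^+ ((n + 1)./2) /\
  (forall k, (k < n)%N -> x k = sg L n k /\ y k = sg L n k).
Proof.
move=> hE hout hR hC [k0 ck0].
have A : forall k, c k != 0 ->
    [/\ (k < n)%N, x k = 0, PP a x k != 0 & QQ n x k != 0].
  move=> k ck.
  have kn : (k < n)%N.
    by rewrite ltnNge; apply/negP => h; move: ck; rewrite hout // eqxx.
  have x0 : x k = 0.
    by move/eqP: (hR k kn); rewrite mulf_eq0 (negbTE ck) /= => /eqP.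
  have PQ : PP a x k * QQ n x k = -1.
    move: (hE k kn); rewrite x0 mul0r sub0r => /eqP; rewrite subr_eq0 => /eqP <-.
    done.
  split => //.
    by apply/eqP => h; move: PQ; rewrite h mul0r => /eqP; rewrite eq_sym oppr_eq0 oner_eq0.
  by apply/eqP => h; move: PQ; rewrite h mulr0 => /eqP; rewrite eq_sym oppr_eq0 oner_eq0.
have B : forall k, c k != 0 -> c k.+1 = 0.
  move=> k ck; apply/eqP; apply: contraT => ck1.
  have [k1n x1 _ _] := A _ ck1.
  have [_ _ _] := A _ ck.
  by rewrite /QQ (ltn_eqF k1n) x1 eqxx.
have B' : forall k, c k.+1 != 0 -> c k = 0.
  move=> k ck1; apply/eqP; apply: contraT => ck.
  have [_ x0 _ _] := A _ ck.
  have [_ _] := A _ ck1.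
  by rewrite /PP /= x0 eqxx.
have Cy : forall k, c k != 0 -> y k = 0.
  move=> k ck; have [kn _ _ _] := A _ ck.
  move: (hC k kn); rewrite B // mul0r subr0.
  have -> : (if k is k'.+1 then c k' * PP a x k' else 0) = 0.
    by case: k ck {kn} => [|k] ck //; rewrite B' // mul0r.
  by rewrite subr0 => /eqP; rewrite mulf_eq0 (negbTE ck) /= => /eqP.
have D : forall k, c k != 0 -> (k.+1 < n)%N -> c k.+2 != 0.
  move=> k ck k1n; apply: contraT; rewrite negbK => /eqP ck2.
  have [_ _ Pk _] := A _ ck.
  move: (hC k.+1 k1n); rewrite B // ck2 !mul0r /= subr0 sub0r => /eqP.
  by rewrite oppr_eq0 mulf_eq0 (negbTE ck) (negbTE Pk).
have D' : forall k, c k.+1 != 0 -> exists2 k', k = k'.+1 & c k' != 0.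
  move=> k ck1; have [k1n _ _ Qk1] := A _ ck1.
  move: (hC k (ltnW k1n)); rewrite B' // mul0r sub0r.
  case: k {k1n} ck1 Qk1 => [|k] ck1 Qk1.
    by rewrite subr0 => /eqP; rewrite oppr_eq0 mulf_eq0 (negbTE ck1) (negbTE Qk1).
  case: (eqVneq (c k) 0) => [ck0'|ck]; last by exists k.
  by rewrite ck0' mul0r subr0 => /eqP; rewrite oppr_eq0 mulf_eq0 (negbTE ck1) (negbTE Qk1).
have Ev : forall j k, (k <= j)%N -> c k != 0 -> ~~ odd k /\ c 0%N != 0.
  elim=> [|j IH] [|[|k]] //=.
  - by move=> _ /D' [].
  - move=> hk /D' [k' [<-]] ck; rewrite negbK.
    by apply: IH => //; rewrite -ltnS ltnW.
have Up : forall j, (j.*2 < n)%N -> c j.*2 != 0.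
  elim=> [|j IH] hj.
    by have [_ ] := Ev _ _ (leqnn k0) ck0.
  rewrite doubleS in hj *; apply: D.
    by apply: IH; rewrite ltnW // ltnW.
  by rewrite ltnW.
have n0 : (0 < n)%N by have [h _ _ _] := A _ ck0; apply: leq_ltn_trans h.
have on : odd n.
  apply: contraT => en.
  have hn : n = (n./2).*2 by rewrite -{1}(odd_double_half n) (negbTE en).
  case E: (n./2) hn => [|j] hn; first by move: n0; rewrite hn.
  have h1 : (j.*2 < n)%N by rewrite hn doubleS ltnW.
  have h2 : (j.*2.+1 < n)%N by rewrite hn doubleS.
  by move: (D _ (Up j h1) h2); rewrite hout ?eqxx // hn doubleS.
have [p hn] : exists p, n = p.*2.+1.
  by exists n./2; rewrite -{1}(odd_double_half n) on.
subst n.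
have xe : forall k, (k < p.*2.+1)%N -> ~~ odd k -> x k = 0 /\ y k = 0.
  move=> k kn ek.
  have hk : k = (k./2).*2 by rewrite -{1}(odd_double_half k) (negbTE ek).
  have ck : c k != 0 by rewrite hk; apply: Up; rewrite -hk.
  by have [_ -> _ _] := A _ ck; rewrite Cy.
have xy1 : forall q, (q.*2.+1 < p.*2.+1)%N -> x (q.*2.+1) * y (q.*2.+1) = 1.
  move=> q hq; move: (hE _ hq).
  have -> : QQ p.*2.+1 x q.*2.+1 = 0.
    rewrite /QQ; have -> : (q.*2.+2 == p.*2.+1) = false.
      by apply/negP => /eqP h; move: (congr1 odd h); rewrite /= !odd_double.
    rewrite -doubleS (xe _ _ _).1 ?odd_double //.
    rewrite doubleS; have : q.*2.+2 != p.*2.+1.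
      by apply/negP => /eqP h; move: (congr1 odd h); rewrite /= !odd_double.
    by rewrite ltn_neqAle => ->; rewrite hq.
  by rewrite mulr0 subr0 => /eqP; rewrite subr_eq0 => /eqP.
have Xv : forall d q, (q + d).+1 = p -> x (q.*2.+1) = (-1) ^+ (p + q).
  elim=> [|d IH] q hq.
    rewrite addn0 in hq; subst p.
    have hk : (q.+1.*2 < q.+1.*2.+1)%N by [].
    move: (hE _ hk); rewrite (xe _ hk _).1 ?odd_double // mul0r.
    rewrite /PP /QQ eqxx doubleS /= mulr1 sub0r => /eqP; rewrite subr_eq0 => /eqP <-.
    by rewrite addSn exprS exprD sgsq mulr1.
  have IH' : x (q.+1.*2.+1) = (-1) ^+ (p + q.+1) by apply: IH; lia.
  have hk : (q.+1.*2 < p.*2.+1)%N by lia.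
  move: (hE _ hk); rewrite (xe _ hk _).1 ?odd_double // mul0r.
  have -> : QQ p.*2.+1 x q.+1.*2 = - (-1) ^+ (p + q).
    rewrite /QQ; have -> : (q.+1.*2.+1 == p.*2.+1) = false by apply/eqP; lia.
    by rewrite IH' addnS exprS mulN1r.
  rewrite /PP doubleS /= sub0r mulrN opprK addrC => /eqP; rewrite subr_eq0 => /eqP Xt.
  by have := congr1 (fun z => z * (-1) ^+ (p + q)) Xt; rewrite -mulrA sgsq mulr1 mul1r.
have Xo : forall q, (q < p)%N -> x (q.*2.+1) = (-1) ^+ (p + q).
  move=> q hq; have hd : (q + (p - q.+1)).+1 = p by lia.
  exact: (Xv _ _ hd).
split => //; split.
  have -> : (p.*2.+1 + 1)./2 = p.+1 by rewrite addn1 -doubleS doubleK.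
  have h0 : (0 < p.*2.+1)%N by [].
  move: (hE _ h0); rewrite (xe _ h0 _).1 // mul0r sub0r /PP /QQ eqxx.
  destruct p as [|p].
    by rewrite /= mulr1 => /eqP; rewrite subr_eq0 => /eqP <-; rewrite expr1.
  have -> : (1 == p.+1.*2.+1) = false by [].
  rewrite (Xo 0%N) // addn0 => /eqP; rewrite subr_eq0 => /eqP ha.
  have := congr1 (fun z => z * (-1) ^+ p.+1) ha; rewrite /= -mulrA sgsq mulr1 => <-.
  by rewrite [RHS]exprS.
move=> k kn; case: (boolP (odd k)) => ok.
  have [q hk] : exists q, k = q.*2.+1 by exists k./2; rewrite -{1}(odd_double_half k) ok.
  subst k.
  have hq : (q < p)%N by lia.
  rewrite sg_odd Xo //; split => //.
  have Xt := xy1 q kn; rewrite Xo // in Xt.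
  by have := congr1 (fun z => (-1) ^+ (p + q) * z) Xt; rewrite /= mulrA sgsq mul1r mulr1 => ->.
have hk : k = (k./2).*2 by rewrite -{1}(odd_double_half k) (negbTE ok).
have [-> ->] := xe _ kn ok; by rewrite hk sg_even.
Qed.
Definition cw (L : fieldType) (n k : nat) : L :=
  if (k < n)%N then (if odd k then 0 else (-1) ^+ (k./2)) else 0.

Lemma sgm1 (L : fieldType) (m : nat) : (-1) ^+ m * (-1) ^+ m.+1 = -1 :> L.
Proof. by rewrite exprS mulrCA sgsq mulr1. Qed.

Lemma sgn2 (L : fieldType) (m : nat) : (-1) ^+ m.+2 = (-1) ^+ m :> L.
Proof. by rewrite !exprS mulrA mulN1r opprK mul1r. Qed.

Lemma evod (k : nat) : exists q, k = q.*2 \/ k = q.*2.+1.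
Proof.
exists k./2; case: (boolP (odd k)) => ok.
  by right; rewrite -{1}(odd_double_half k) ok.
by left; rewrite -{1}(odd_double_half k) (negbTE ok).
Qed.

Lemma backward (L : fieldType) (a : L) (p : nat) (x y : nat -> L) :
  a = (-1) ^+ ((p.*2.+1 + 1)./2) ->
  (forall k, (k < p.*2.+1)%N -> x k = sg L p.*2.+1 k /\ y k = sg L p.*2.+1 k) ->
  [/\ (forall k, (k < p.*2.+1)%N -> x k * y k - 1 - PP a x k * QQ p.*2.+1 x k = 0),
      (forall k, (k < p.*2.+1)%N -> cw L p.*2.+1 k * x k = 0) &
      (forall k, (k < p.*2.+1)%N -> cw L p.*2.+1 k * y k - cw L p.*2.+1 k.+1 * QQ p.*2.+1 x k.+1
       - (if k is k'.+1 then cw L p.*2.+1 k' * PP a x k' else 0) = 0)].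
Proof.
rewrite addn1 -doubleS doubleK => ha hxy.
have Xo : forall q, (q < p)%N -> x (q.*2.+1) = (-1) ^+ (p + q) /\ y (q.*2.+1) = (-1) ^+ (p + q).
  by move=> q hq; rewrite !(hxy _ _).1 ?(hxy _ _).2 ?sg_odd //; lia.
have Xe : forall q, (q.*2 < p.*2.+1)%N -> x (q.*2) = 0 /\ y (q.*2) = 0.
  by move=> q hq; rewrite (hxy _ hq).1 (hxy _ hq).2 sg_even.
have co : forall q, cw L p.*2.+1 q.*2.+1 = 0.
  by move=> q; rewrite /cw oddS odd_double /=; case: ifP.
have ce : forall q, (q.*2 < p.*2.+1)%N -> cw L p.*2.+1 q.*2 = (-1) ^+ q.
  by move=> q hq; rewrite /cw hq odd_double doubleK.
split.
- move=> k; have [q [->|->]] := evod k => hk.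
    rewrite (Xe _ hk).1 mul0r sub0r.
    suff -> : PP a x q.*2 * QQ p.*2.+1 x q.*2 = -1 by rewrite subrr.
    case: q hk => [|q] hk.
      rewrite /PP /QQ /= ha; destruct p as [|p]; first by rewrite expr1 mulr1.
      by rewrite /= (Xo 0%N _).1 // addn0 mulrC sgm1.
    rewrite /PP /QQ doubleS /= (Xo q _).1; last by lia.
    case: eqP => h.
      have hp : p = q.+1 by lia.
      by subst p; rewrite mulr1 addSn exprS exprD sgsq mulr1.
    have -> : q.*2.+3 = q.+1.*2.+1 by rewrite doubleS.
    by rewrite (Xo q.+1 _).1 ?addnS ?sgm1 //; lia.
  have hq : (q < p)%N by lia.
  rewrite (Xo q hq).1 (Xo q hq).2 sgsq /PP /= (Xe q _).1; last by lia.
  by rewrite mul0r subr0 subrr.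
- move=> k; have [q [->|->]] := evod k => hk.
    by rewrite (Xe _ hk).1 mulr0.
  by rewrite co mul0r.
- move=> k; have [q [->|->]] := evod k => hk.
    rewrite (Xe _ hk).2 mulr0 co mul0r subrr sub0r.
    case: q hk => [|q] hk; first by rewrite oppr0.
    by rewrite doubleS /= co mul0r oppr0.
  have hq : (q < p)%N by lia.
  rewrite co mul0r sub0r -doubleS (ce q.+1); last by lia.
  have hu : QQ p.*2.+1 x q.+1.*2 = (-1) ^+ (p + q.+1).
    rewrite /QQ; case: eqP => h.
      have hp : p = q.+1 by lia.
      by subst p; rewrite exprD sgsq.
    by rewrite (Xo q.+1 _).1 //; lia.
  have hP : PP a x q.*2 = (-1) ^+ (p + q.+1).
    case: q {hk hu} hq => [|q] hq; first by rewrite /PP /= ha addn1.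
    by rewrite /PP doubleS /= (Xo q _).1 ?addnS ?sgn2 //; lia.
  rewrite hu /= (ce q) ?hP; last by lia.
  by rewrite exprS mulN1r mulNr opprK subrr.
Qed.
Lemma rank_lt (L : fieldType) m N (A : 'M[L]_(m, N)) :
  (\rank A < m)%N <-> exists c : 'rV_m, c != 0 /\ c *m A = 0.
Proof.
split.
  move=> hr; apply: Classical_Prop.NNPP => H.
  have : row_free A.
    apply: inj_row_free => w hw; apply/eqP; apply: contraT => hw0.
    by case: H; exists w.
  by rewrite -row_leq_rank leqNgt hr.
move=> [c [hc hcA]]; rewrite ltnNge row_leq_rank; apply/negP => rf.
by move: (mulmx_free_eq0 c rf); rewrite hcA eqxx (negbTE hc).
Qed.

Lemma split_l m N (j : 'I_m) : split (lshift N j) = inl j.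
Proof. exact: (@unsplitK m N (inl j)). Qed.

Lemma split_r m N (j : 'I_N) : split (rshift m j) = inr j.
Proof. exact: (@unsplitK m N (inr j)). Qed.

Lemma sing_forward (K L : fieldType) (f : {rmorphism K -> L}) (a : K) n (v : 'I_(n + n) -> L) :
  singularX f a v ->
  odd n /\ f a = (-1) ^+ ((n + 1)./2) /\
  (forall k, (k < n)%N -> xv v k = sg L n k /\ xpv v k = sg L n k).
Proof.
move=> [hon hrk]; have [c [hc0 hcJ]] := (rank_lt _).1 hrk.
apply: (@forward L (f a) n (xv v) (xpv v) (cn c)).
- by move=> k hk; have := hon (Ordinal hk); rewrite eval_Xeq.
- exact: cn_out.
- move=> k hk; move: (col_r f a v c (Ordinal hk)); rewrite hcJ mxE /= => <-.
  done.
- move=> k hk; move: (col_l f a v c (Ordinal hk)); rewrite hcJ mxE /= => <-.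
  done.
- case: (pickP (fun i => c 0 i != 0)) => [i hi|h].
    by exists i; rewrite cn_ord.
  by case/eqP: hc0; apply/rowP => i; rewrite mxE; move: (h i) => /negbFE/eqP.
Qed.
Lemma sing_backward (K L : fieldType) (f : {rmorphism K -> L}) (a : K) n (v : 'I_(n + n) -> L) :
  odd n -> f a = (-1) ^+ ((n + 1)./2) -> v =1 @singPt L n -> singularX f a v.
Proof.
move=> on ha hv.
have [p hn] : exists p, n = p.*2.+1.
  by exists n./2; rewrite -{1}(odd_double_half n) on.
subst n.
have hxy : forall k, (k < p.*2.+1)%N ->
    xv v k = sg L p.*2.+1 k /\ xpv v k = sg L p.*2.+1 k.
  move=> k hk; rewrite /xv /xpv (insubT (fun m => (m < p.*2.+1)%N) hk) !hv /singPt.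
  by rewrite split_l split_r.
have [hE hR hC] := backward ha hxy.
split.
  by move=> i; rewrite eval_Xeq; exact: (hE _ (ltn_ord i)).
apply/(rank_lt _).2.
exists (\row_(i < p.*2.+1) cw L p.*2.+1 i).
have hcn : forall k, cn (\row_(i < p.*2.+1) cw L p.*2.+1 i) k = cw L p.*2.+1 k.
  move=> k; rewrite /cn; case: insubP => [i hi <-|hi]; first by rewrite mxE.
  by rewrite /cw (negbTE hi).
split.
  apply/eqP => /rowP /(_ ord0); rewrite !mxE /cw /= expr0 => /eqP.
  by rewrite oner_eq0.
apply/rowP => j; rewrite [RHS]mxE; case: (split_ordP j) => k ->.
  move: k => [[|k'] hk]; rewrite col_l /= !hcn.
    exact: (hC 0%N hk).
  exact: (hC k'.+1 hk).
by rewrite col_r hcn; apply: hR.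
Qed.

Unset Implicit Arguments.
Theorem mainTheorem14 (K : fieldType) (a : K) (n : nat) (ha : a != 0) :
  (~~ odd n -> smoothX a n) /\
  (odd n -> a != (-1) ^+ ((n + 1)./2) -> smoothX a n) /\
  (odd n -> a = (-1) ^+ ((n + 1)./2) ->
     forall (L : fieldType) (f : {rmorphism K -> L}) (v : 'I_(n + n) -> L),
       singularX f a v <-> v =1 @singPt L n).
Proof.
split.
  move=> en L f v hs; have [on _] := sing_forward hs.
  by rewrite on in en.
split.
  move=> on hna L f v hs; have [_ [hfa _]] := sing_forward hs.
  move/negP: hna; apply; apply/eqP; apply: (fmorph_inj f).
  by rewrite hfa rmorphXn rmorphN1.
move=> on hfa L f v; split.
  move=> hs; have [_ [_ hxy]] := sing_forward hs.
  move=> j; case: (split_ordP j) => k ->; rewrite /singPt ?split_l ?split_r;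
    have := hxy k (ltn_ord k); rewrite /xv /xpv valK /sg.
    by case=> -> _.
  by case=> _ ->.
move=> hv; apply: sing_backward => //.
by rewrite hfa rmorphXn rmorphN1.
Qed.
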